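(* Let $B_1,B_2>0$, $\mathcal{W}=\{\mathbf{w}\in\mathbb{R}^d\colon\|\mathbf{w}\|<B_1\}$ and $\mathcal{X}=\{\mathbf{x}\in\mathbb{R}^d\colon\|\mathbf{x}\|\le B_2\}$, and let $\rho\in[0,1]$. Consider the function classes (dropout outputs of a network with no hidden layer) \[ \mathcal{F}^{(I)}_\mathcal{W}=\{(\mathbf{x},\mathbf{r})\mapsto\langle\mathbf{w},\mathbf{x}\odot\mathbf{r}\rangle\colon\mathbf{w}\in\mathcal{W}\},\quad \mathcal{F}^{(II)}_\mathcal{W}=\{(\mathbf{x},\mathbf{r})\mapsto\langle\mathbf{w}\odot\mathbf{r},\mathbf{x}\rangle\colon\mathbf{w}\in\mathcal{W}\}, \] \[ \mathcal{F}^{(III)}_\mathcal{W}=\{(\mathbf{x},(\mathbf{r}_1,\mathbf{r}_2))\mapsto\langle\mathbf{w}\odot\mathbf{r}_1,\mathbf{x}\odot\mathbf{r}_2\rangle\colon\mathbf{w}\in\mathcal{W}\}, \] where $\mathbf{r},\mathbf{r}_1,\mathbf{r}_2\in\{0,1\}^d$ have i.i.d. Bern$(\rho)$ entries. Then \[ \mathfrak{R}_n(\mathcal{F}^{(I)}_\mathcal{W})=\mathfrak{R}_n(\mathcal{F}^{(II)}_\mathcal{W})\le B_1B_2\sqrt{\rho/n}\quad\text{and}\quad\mathfrak{R}_n(\mathcal{F}^{(III)}_\mathcal{W})\le B_1B_2\rho/\sqrt{n}. \]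
   Context: $\|\cdot\|$ is the Euclidean norm and $\odot$ the entrywise product. Inputs $\mathbf{x}_1,\dots,\mathbf{x}_n$ are drawn i.i.d. from a distribution on $\mathcal{X}$ (the $\mathcal{X}$-marginal of a distribution on $\mathcal{X}\times\mathcal{Y}$), and dropout variables $\mathbf{r}_1,\dots,\mathbf{r}_n$ (each a vector, or pair of vectors, as appropriate to the class) are drawn i.i.d. independently of the inputs with all entries i.i.d. Bern$(\rho)$. For a class $\mathcal{H}$ of functions $h(\mathbf{x},\mathbf{r})$, $\hat{\mathfrak{R}}_n(\mathcal{H},S_n,RS_n)=E_\epsilon[\sup_{h\in\mathcal{H}}\frac1n\sum_{i=1}^n\epsilon_i h(\mathbf{x}_i,\mathbf{r}_i)]$ with $\epsilon_i$ i.i.d. uniform on $\{\pm1\}$, and $\mathfrak{R}_n(\mathcal{H})=E_{S_n,RS_n}[\hat{\mathfrak{R}}_n(\mathcal{H},S_n,RS_n)]$. *)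

(* Defs.v *)
From HB Require Import structures.
From mathcomp Require Import all_boot all_order all_algebra.
From mathcomp Require Import all_classical all_reals all_analysis.
Set Implicit Arguments. Unset Strict Implicit. Unset Printing Implicit Defensive.
Import Order.TTheory GRing.Theory Num.Theory.
Local Open Scope classical_set_scope.
Local Open Scope ring_scope.

Section Dropout.
Variable R : realType.

Definition dotv (d : nat) (u v : 'rV[R]_d) : R := \sum_(k < d) u 0 k * v 0 k.
Definition normv (d : nat) (u : 'rV[R]_d) : R := Num.sqrt (dotv u u).
Definition hadamard (d : nat) (u v : 'rV[R]_d) : 'rV[R]_d := \row_k (u 0 k * v 0 k).
Definition maskv (d : nat) (r : {ffun 'I_d -> bool}) : 'rV[R]_d := \row_k (r k)%:R.

Definition bern (rho : R) (b : bool) : R := if b then rho else 1 - rho.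
Definition bern_mask (rho : R) (d : nat) (r : {ffun 'I_d -> bool}) : R :=
  \prod_(k < d) bern rho (r k).
Definition bern_mask2 (rho : R) (d : nat)
  (r : {ffun 'I_d -> bool} * {ffun 'I_d -> bool}) : R :=
  bern_mask rho r.1 * bern_mask rho r.2.

Definition rsign (b : bool) : R := if b then 1 else -1.

(* Empirical Rademacher complexity of the class {h w | w in W}, for a sample
   xs and dropout variables rs: E_eps[ sup_w (1/n) sum_i eps_i h_w(x_i, r_i) ],
   eps uniform on {+-1}^n. *)
Definition emp_rad (RT : Type) (d n : nat)
  (h : 'rV[R]_d -> 'rV[R]_d -> RT -> R) (W : set 'rV[R]_d)
  (xs : 'I_n -> 'rV[R]_d) (rs : 'I_n -> RT) : R :=
  \sum_(eps : {ffun 'I_n -> bool})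
     (2 ^- n) * sup [set (n%:R)^-1 * \sum_(i < n) rsign (eps i) * h w (xs i) (rs i)
                     | w in W].

Definition rad_drop (RT : finType) (wt : RT -> R) (d n : nat)
  (h : 'rV[R]_d -> 'rV[R]_d -> RT -> R) (W : set 'rV[R]_d)
  (xs : 'I_n -> 'rV[R]_d) : R :=
  \sum_(rs : {ffun 'I_n -> RT}) (\prod_(i < n) wt (rs i)) * emp_rad h W xs rs.

Definition hI (d : nat) (w x : 'rV[R]_d) (r : {ffun 'I_d -> bool}) : R :=
  dotv w (hadamard x (maskv r)).
Definition hII (d : nat) (w x : 'rV[R]_d) (r : {ffun 'I_d -> bool}) : R :=
  dotv (hadamard w (maskv r)) x.
Definition hIII (d : nat) (w x : 'rV[R]_d)
  (r : {ffun 'I_d -> bool} * {ffun 'I_d -> bool}) : R :=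
  dotv (hadamard w (maskv r.1)) (hadamard x (maskv r.2)).

End Dropout.

(* The sample S_n = (x_1,...,x_n) as a random element of (R^d)^n on a
   probability space: every coordinate measurable, the x_i mutually
   independent and identically distributed (stated on products of Borel
   sets of coordinates, which form a generating pi-system of the Borel
   sigma-algebra of R^d). *)
Definition sample_measurable {d0 : measure_display} {Om : measurableType d0}
  {R : realType} (d n : nat) (S : Om -> 'I_n -> 'rV[R]_d) : Prop :=
  forall (i : 'I_n) (k : 'I_d), measurable_fun setT (fun om => S om i ord0 k).

Definition sample_iid {d0 : measure_display} {Om : measurableType d0}
  {R : realType} (P : probability Om R) (d n : nat)
  (S : Om -> 'I_n -> 'rV[R]_d) : Prop :=
  (forall B : 'I_n -> 'I_d -> set R, (forall i k, measurable (B i k)) ->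
     P [set om | forall i k, B i k (S om i ord0 k)] =
     (\prod_(i < n) P [set om | forall k, B i k (S om i ord0 k)])%E)
  /\
  (forall B : 'I_d -> set R, (forall k, measurable (B k)) ->
     forall i j : 'I_n,
     P [set om | forall k, B k (S om i ord0 k)] = P [set om | forall k, B k (S om j ord0 k)]).

Definition rademacher {d0 : measure_display} {Om : measurableType d0}
  {R : realType} (P : probability Om R) (RT : finType) (wt : RT -> R) (d n : nat)
  (h : 'rV[R]_d -> 'rV[R]_d -> RT -> R) (W : set 'rV[R]_d)
  (S : Om -> 'I_n -> 'rV[R]_d) : \bar R :=
  (\int[P]_om (rad_drop wt h W (S om))%:E)%E.

(* Main.v *)
Require Import Defs.
From HB Require Import structures.
From mathcomp Require Import all_boot all_order all_algebra.
From mathcomp Require Import all_classical all_reals all_analysis measurable_realfun.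
From mathcomp Require Import ring lra.
Import Order.TTheory GRing.Theory Num.Theory.
Local Open Scope classical_set_scope.
Local Open Scope ring_scope.

Lemma prod_if (R : realType) (I : finType) (i : I) (X : I -> R) :
  \prod_l (if l == i then X l else 1) = X i.
Proof. by rewrite -big_mkcond big_pred1_eq. Qed.

Lemma sum_prod_marg (R : realType) (I J : finType) (p : J -> R) (i : I) (G : J -> R) :
  \sum_j p j = 1 ->
  \sum_(f : {ffun I -> J}) (\prod_l p (f l)) * G (f i) = \sum_j p j * G j.
Proof.
move=> p1.
transitivity (\sum_(f : {ffun I -> J}) \prod_l (p (f l) * (if l == i then G (f l) else 1))).
  by apply: eq_bigr => f _; rewrite big_split /= prod_if.
rewrite -(bigA_distr_bigA (fun l j => p j * (if l == i then G j else 1))) /= (bigD1 i) //= [X in _ * X]big1 ?mulr1.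
  by apply: eq_bigr => j _; rewrite eqxx.
move=> l /negbTE li; under eq_bigr do rewrite li mulr1; exact: p1.
Qed.

Lemma sum_prod1 (R : realType) (I J : finType) (p : J -> R) :
  \sum_j p j = 1 -> \sum_(f : {ffun I -> J}) \prod_l p (f l) = 1.
Proof.
move=> p1; rewrite -(bigA_distr_bigA (fun _ j => p j)) /=; apply: big1 => l _; exact: p1.
Qed.

Lemma rad_orth (R : realType) (n : nat) (i j : 'I_n) :
  \sum_(eps : {ffun 'I_n -> bool}) 2 ^- n * (rsign R (eps i) * rsign R (eps j))
  = (i == j)%:R.
Proof.
pose g (l : 'I_n) (b : bool) : R :=
  2^-1 * ((if l == i then rsign R b else 1) * (if l == j then rsign R b else 1)).
transitivity (\sum_(eps : {ffun 'I_n -> bool}) \prod_l g l (eps l)).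
  apply: eq_bigr => eps _; rewrite /g big_split /= big_split /= !prod_if.
  by rewrite prodr_const card_ord exprVn.
rewrite -(bigA_distr_bigA g) /= /g.
have [<-|ij] := eqVneq i j.
  apply: big1 => l _; rewrite big_bool /=.
  by case: (l == i); rewrite /rsign /=; field.
rewrite (bigD1 i) //= big_bool /= eqxx (negbTE (ij : i != j)) /rsign.
by rewrite (_ : _ + _ = 0) ?mul0r //; ring.
Qed.

Lemma sum_eps1 (R : realType) (n : nat) :
  \sum_(eps : {ffun 'I_n -> bool}) (2 ^- n : R) = 1.
Proof.
transitivity (\sum_(eps : {ffun 'I_n -> bool}) \prod_(l < n) (2^-1 : R)).
  by apply: eq_bigr => eps _; rewrite prodr_const card_ord exprVn.
apply: (@sum_prod1 R 'I_n bool (fun _ => 2^-1)); by rewrite big_bool /=; field.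
Qed.

Lemma eps_sq (R : realType) (n d : nat) (u : 'I_n -> 'I_d -> R) :
  \sum_(eps : {ffun 'I_n -> bool}) 2 ^- n *
     \sum_k (\sum_i rsign R (eps i) * u i k) ^+ 2
  = \sum_i \sum_k u i k ^+ 2.
Proof.
under eq_bigr => eps _ do rewrite mulr_sumr.
rewrite exchange_big [RHS]exchange_big /=; apply: eq_bigr => k _.
transitivity (\sum_(eps : {ffun 'I_n -> bool}) \sum_i \sum_j
   (2 ^- n * (rsign R (eps i) * rsign R (eps j))) * (u i k * u j k)).
  apply: eq_bigr => eps _; rewrite expr2 big_distrl mulr_sumr /=.
  apply: eq_bigr => i _; rewrite big_distrr mulr_sumr /=.
  by apply: eq_bigr => j _; ring.
rewrite exchange_big /=; apply: eq_bigr => i _.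
rewrite exchange_big /= (bigD1 i) //= [X in _ + X]big1 ?addr0.
  by rewrite -big_distrl /= rad_orth eqxx mul1r expr2.
move=> j ji; rewrite -big_distrl /= rad_orth.
by rewrite eq_sym (negbTE ji) mul0r.
Qed.

Lemma cs_dot (R : realType) (d : nat) (a b : 'I_d -> R) (B : R) :
  0 < B -> Num.sqrt (\sum_k a k * a k) < B ->
  \sum_k a k * b k <= B * Num.sqrt (\sum_k b k ^+ 2).
Proof.
move=> B0 aB.
set X := \sum_k a k * a k; set Y := \sum_k b k ^+ 2; set Z := \sum_k a k * b k.
have X0 : 0 <= X by apply: sumr_ge0 => k _; rewrite -expr2 sqr_ge0.
have Y0 : 0 <= Y by apply: sumr_ge0 => k _; rewrite sqr_ge0.
have XB : X <= B ^+ 2.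
  have sX := sqrtr_ge0 X; have := sqr_sqrtr X0; nra.
set s := Num.sqrt Y.
have s0 : 0 <= s by rewrite sqrtr_ge0.
have sY : s ^+ 2 = Y by rewrite sqr_sqrtr.
have [s_eq0|s_gt0] := eqVneq s 0.
  have Y00 : Y = 0 by move: s_eq0; rewrite /s => /eqP; rewrite sqrtr_eq0 => H; apply/le_anti; rewrite H Y0.
  have b0 : forall k, b k = 0.
    move=> k; have := @psumr_eq0P _ _ xpredT (fun k => b k ^+ 2) (fun k _ => sqr_ge0 (b k)) Y00 k isT.
    by move/eqP; rewrite sqrf_eq0 => /eqP.
  rewrite s_eq0 mulr0 /Z big1 // => k _; by rewrite b0 mulr0.
have sp : 0 < s by rewrite lt_def s_gt0 s0.
have E : \sum_k (s * a k - B * b k) ^+ 2 = s ^+ 2 * X - 2 * s * B * Z + B ^+ 2 * Y.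
  rewrite /X /Z /Y !mulr_sumr -sumrB -big_split /=; apply: eq_bigr => k _; ring.
have H : 0 <= s ^+ 2 * X - 2 * s * B * Z + B ^+ 2 * Y.
  by rewrite -E; apply: sumr_ge0 => k _; rewrite sqr_ge0.
rewrite -sY in H.
have H2 : 0 <= s ^+ 2 * (B ^+ 2 - X) by rewrite mulr_ge0 ?sqr_ge0 ?subr_ge0.
have sB : 0 < s * B by rewrite mulr_gt0.
nra.
Qed.

Lemma jensen_sqrt (R : realType) (I : finType) (q a : I -> R) :
  (forall j, 0 <= q j) -> \sum_j q j = 1 ->
  \sum_j q j * a j <= Num.sqrt (\sum_j q j * a j ^+ 2).
Proof.
move=> q0 q1.
set m := \sum_j q j * a j.
have E : forall m : R, \sum_j q j * (a j - m) ^+ 2 =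
   \sum_j q j * a j ^+ 2 - 2 * m * (\sum_j q j * a j) + m ^+ 2 * \sum_j q j.
  move=> m'; rewrite !mulr_sumr -sumrB -big_split /=; apply: eq_bigr => j _; ring.
have H : 0 <= \sum_j q j * (a j - m) ^+ 2.
  by apply: sumr_ge0 => j _; rewrite mulr_ge0 ?sqr_ge0.
rewrite E q1 mulr1 -/m in H.
apply: (le_trans (ler_norm m)); rewrite -sqrtr_sqr; apply: ler_wsqrtr.
have : m ^+ 2 = m * m by rewrite expr2.
lra.
Qed.

Lemma sup_bound (R : realType) (d n : nat) (RT : Type)
  (h : 'rV[R]_d -> 'rV[R]_d -> RT -> R) (c : 'rV[R]_d -> RT -> 'I_d -> R)
  (B1 : R) (xs : 'I_n -> 'rV[R]_d) (rs : 'I_n -> RT) (eps : {ffun 'I_n -> bool}) :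
  0 < B1 -> (forall w x r, h w x r = \sum_k w 0 k * c x r k) ->
  sup [set n%:R^-1 * \sum_(i < n) rsign R (eps i) * h w (xs i) (rs i)
         | w in [set w : 'rV[R]_d | normv w < B1]]
  <= n%:R^-1 * (B1 * Num.sqrt (\sum_k (\sum_i rsign R (eps i) * c (xs i) (rs i) k) ^+ 2)).
Proof.
move=> B0 hE; apply: ge_sup.
  exists (n%:R^-1 * \sum_(i < n) rsign R (eps i) * h 0 (xs i) (rs i)); exists 0 => //=.
  rewrite /normv /dotv big1 ?sqrtr0 // => k _; by rewrite mxE mul0r.
move=> _ [w /= Ww <-].
apply: ler_wpM2l; first by rewrite invr_ge0 ler0n.
have -> : \sum_(i < n) rsign R (eps i) * h w (xs i) (rs i) =
   \sum_k w 0 k * (\sum_i rsign R (eps i) * c (xs i) (rs i) k).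
  under eq_bigr do rewrite hE mulr_sumr.
  rewrite exchange_big /=; apply: eq_bigr => k _; rewrite mulr_sumr.
  by apply: eq_bigr => i _; ring.
exact: cs_dot.
Qed.

Lemma rad_bound (R : realType) (RT : finType) (wt : RT -> R) (d n : nat)
  (h : 'rV[R]_d -> 'rV[R]_d -> RT -> R) (c : 'rV[R]_d -> RT -> 'I_d -> R)
  (B1 : R) (xs : 'I_n -> 'rV[R]_d) (K : R) :
  0 < B1 -> (forall r, 0 <= wt r) -> \sum_r wt r = 1 ->
  (forall w x r, h w x r = \sum_k w 0 k * c x r k) ->
  (forall i, \sum_r wt r * \sum_k (c (xs i) r k) ^+ 2 <= K) ->
  rad_drop wt h [set w | normv w < B1] xs
    <= n%:R^-1 * B1 * Num.sqrt (n%:R * K).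
Proof.
move=> B0 wt0 wt1 hE hK.
pose v (rs : {ffun 'I_n -> RT}) (eps : {ffun 'I_n -> bool}) k :=
  \sum_i rsign R (eps i) * c (xs i) (rs i) k.
pose nv rs eps := Num.sqrt (\sum_k v rs eps k ^+ 2).
pose q (p : {ffun 'I_n -> RT} * {ffun 'I_n -> bool}) :=
  (\prod_(i < n) wt (p.1 i)) * 2 ^- n.
have p0 : forall rs : {ffun 'I_n -> RT}, 0 <= \prod_(i < n) wt (rs i).
  by move=> rs; apply: prodr_ge0 => i _.
have e0 : 0 <= (2 ^- n : R) by rewrite invr_ge0 exprn_ge0.
have q0 : forall p, 0 <= q p by move=> p; rewrite mulr_ge0.
have q1 : \sum_p q p = 1.
  rewrite -(pair_bigA _ (fun rs eps => q (rs, eps))) /= /q.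
  under eq_bigr do rewrite /= -mulr_sumr sum_eps1 mulr1.
  exact: sum_prod1.
apply: (@le_trans _ _ (n%:R^-1 * B1 * \sum_p q p * nv p.1 p.2)).
  rewrite /rad_drop -(pair_bigA _ (fun rs eps => q (rs, eps) * nv rs eps)) /=.
  rewrite mulr_sumr; apply: ler_sum => rs _.
  rewrite /emp_rad mulr_sumr mulr_sumr; apply: ler_sum => eps _.
  apply: le_trans.
    apply: ler_wpM2l; first exact: p0.
    apply: ler_wpM2l; first exact: e0.
    exact: (@sup_bound R d n RT h c B1 xs rs eps B0 hE).
  rewrite /q /nv /v /= le_eqVlt; apply/orP; left; apply/eqP; ring.
apply: ler_wpM2l; first by rewrite mulr_ge0 ?invr_ge0 ?ler0n ?ltW.
apply: le_trans (@jensen_sqrt R _ q (fun p => nv p.1 p.2) q0 q1) _.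
apply: ler_wsqrtr.
rewrite -(pair_bigA _ (fun rs eps => q (rs, eps) * nv rs eps ^+ 2)) /=.
have -> : \sum_rs \sum_eps q (rs, eps) * nv rs eps ^+ 2 =
    \sum_i \sum_r wt r * \sum_k (c (xs i) r k) ^+ 2.
  transitivity (\sum_(rs : {ffun 'I_n -> RT}) (\prod_(i < n) wt (rs i)) *
     \sum_i \sum_k (c (xs i) (rs i) k) ^+ 2).
    apply: eq_bigr => rs _; rewrite /q /= -(@eps_sq R n d (fun i k => c (xs i) (rs i) k)).
    rewrite mulr_sumr; apply: eq_bigr => eps _.
    rewrite /nv sqr_sqrtr ?sumr_ge0 // => [|k _]; last exact: sqr_ge0.
    by rewrite /v mulrA.
  under eq_bigr do rewrite mulr_sumr.
  rewrite exchange_big /=; apply: eq_bigr => i _.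
  exact: (@sum_prod_marg R _ RT wt i (fun r => \sum_k (c (xs i) r k) ^+ 2) wt1).
apply: (@le_trans _ _ (\sum_(i < n) K)).
  by apply: ler_sum => i _; exact: hK.
by rewrite sumr_const card_ord mulr_natl.
Qed.

Lemma bern_sum1 (R : realType) (rho : R) : \sum_b bern rho b = 1.
Proof. rewrite big_bool /=; ring. Qed.

Lemma bern_mask_ge0 (R : realType) (rho : R) (d : nat) (r : {ffun 'I_d -> bool}) :
  0 <= rho <= 1 -> 0 <= bern_mask rho r.
Proof.
move=> /andP[r0 r1]; apply: prodr_ge0 => k _; rewrite /bern.
by case: (r k) => //; rewrite subr_ge0.
Qed.

Lemma bern_mask_sum1 (R : realType) (rho : R) (d : nat) :
  \sum_(r : {ffun 'I_d -> bool}) bern_mask rho r = 1.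
Proof. rewrite /bern_mask; exact: (@sum_prod1 R 'I_d bool (bern rho) (@bern_sum1 R rho)). Qed.

Lemma bern_mask_sq (R : realType) (rho : R) (d : nat) (k : 'I_d) :
  \sum_(r : {ffun 'I_d -> bool}) bern_mask rho r * ((r k)%:R ^+ 2) = rho.
Proof.
rewrite /bern_mask (@sum_prod_marg R 'I_d bool (bern rho) k (fun b => (b%:R : R) ^+ 2) (@bern_sum1 R rho)).
rewrite big_bool /=; ring.
Qed.

Lemma norm_sq_le (R : realType) (d : nat) (x : 'rV[R]_d) (B2 : R) :
  normv x <= B2 -> \sum_k (x 0 k) ^+ 2 <= B2 ^+ 2.
Proof.
rewrite /normv /dotv => H.
have X0 : 0 <= \sum_k x 0 k * x 0 k by apply: sumr_ge0 => k _; rewrite -expr2 sqr_ge0.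
have -> : \sum_k (x 0 k) ^+ 2 = \sum_k x 0 k * x 0 k by apply: eq_bigr => k _; rewrite expr2.
have sX := sqrtr_ge0 (\sum_k x 0 k * x 0 k); have := sqr_sqrtr X0; nra.
Qed.

Import HBNNSimple.

Lemma int_le_cst (R : realType) (d0 : measure_display) (Om : measurableType d0)
  (P : probability Om R) (f : Om -> R) (C : R) :
  (forall x, f x <= C) -> 0 <= C -> (\int[P]_x (f x)%:E <= C%:E)%E.
Proof.
move=> fC C0.
rewrite /integral.
apply: (@le_trans _ _ (C%:E - 0%E)%E); last by rewrite sube0.
apply: leeB.
- apply: ge_ereal_sup => _ [h /= hle <-].
  rewrite (_ : sintegral P h = \int[P]_(x in setT) (h x)%:E)%E; last first.
    rewrite integral_nnsfun //; congr sintegral; apply/funext => x.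
    by rewrite /restrict /patch in_setT.
  rewrite (_ : (C%:E = \int[P]_(x in setT) (cst C%:E) x)%E); last first.
    rewrite integral_cst //; rewrite [X in (_ * X)%E](_ : _ = 1%E) ?mule1 //; exact: (probability_setT P).
  apply: (ge0_le_integral P measurableT) => //.
  + by move=> x _; rewrite lee_fin fun_ge0.
  + by apply/measurable_EFinP; exact: measurable_funP.
  + move=> x _; apply: le_trans (hle x) _.
    rewrite funeposE /restrict /patch in_setT ge_max !lee_fin fC C0 //=.
- apply: ereal_sup_ubound => /=; exists nnsfun0.
  + by move=> x; rewrite funeneg_ge0.
  + exact: sintegral0.
Qed.

Theorem theorem2 (R : realType) (d0 : measure_display) (Om : measurableType d0)
  (P : probability Om R) (d n : nat) (B1 B2 rho : R)
  (S : Om -> 'I_n -> 'rV[R]_d) :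
  (0 < n)%N -> 0 < B1 -> 0 < B2 -> 0 <= rho <= 1 ->
  sample_measurable S -> sample_iid P S ->
  (forall om i, normv (S om i) <= B2) ->
  let W := [set w : 'rV[R]_d | normv w < B1] in
  rademacher P (bern_mask rho (d:=d)) (@hI R d) W S
    = rademacher P (bern_mask rho (d:=d)) (@hII R d) W S /\
  (rademacher P (bern_mask rho (d:=d)) (@hI R d) W S
    <= (B1 * B2 * Num.sqrt (rho / n%:R))%:E)%E /\
  (rademacher P (bern_mask2 rho (d:=d)) (@hIII R d) W S
    <= (B1 * B2 * rho / Num.sqrt n%:R)%:E)%E.
Proof.
move=> n0 B10 B20 rho01 _ _ SB W.
have /andP[rho0 rho1] := rho01.
have n0' : (0 : R) < n%:R by rewrite ltr0n.
set sn := Num.sqrt (n%:R : R).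
have sn0 : 0 < sn by rewrite sqrtr_gt0.
have snn : sn ^+ 2 = n%:R by rewrite sqr_sqrtr // ltW.
split.
  have -> : @hI R d = @hII R d.
    apply/funext => w; apply/funext => x; apply/funext => r.
    rewrite /hI /hII /dotv; apply: eq_bigr => k _; rewrite !mxE; ring.
  by [].
split.
  rewrite /rademacher; apply: int_le_cst; last first.
    by rewrite !mulr_ge0 ?sqrtr_ge0 ?ltW.
  move=> om.
  apply: le_trans.
    apply: (@rad_bound R _ (bern_mask rho (d:=d)) d n (@hI R d)
      (fun x r k => x 0 k * (r k)%:R) B1 (S om) (rho * B2 ^+ 2) B10).
    - by move=> r; exact: bern_mask_ge0.
    - exact: bern_mask_sum1.
    - by move=> w x r; rewrite /hI /dotv; apply: eq_bigr => k _; rewrite !mxE.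
    - move=> i.
      have -> : \sum_r bern_mask rho r * \sum_k (S om i 0 k * (r k)%:R) ^+ 2
          = \sum_k S om i 0 k ^+ 2 * (\sum_(r : {ffun 'I_d -> bool}) bern_mask rho r * ((r k)%:R ^+ 2)).
        under eq_bigr do rewrite mulr_sumr.
        rewrite exchange_big /=; apply: eq_bigr => k _; rewrite mulr_sumr.
        by apply: eq_bigr => r _; ring.
      under eq_bigr do rewrite bern_mask_sq.
      rewrite -mulr_suml mulrC ler_wpM2l //.
      exact: norm_sq_le.
  have -> : Num.sqrt (n%:R * (rho * B2 ^+ 2)) = sn * Num.sqrt rho * B2.
    rewrite sqrtrM; last exact: ler0n.
    rewrite sqrtrM // sqrtr_sqr ger0_norm ?ltW //. by rewrite mulrA.
  have -> : Num.sqrt (rho / n%:R) = Num.sqrt rho / sn.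
    by rewrite sqrtrM // sqrtrV // ler0n.
  rewrite -snn le_eqVlt; apply/orP; left; apply/eqP; field.
  by rewrite gt_eqF.
rewrite /rademacher; apply: int_le_cst; last first.
  apply: mulr_ge0; last by rewrite invr_ge0 sqrtr_ge0.
  by rewrite !mulr_ge0 // ltW.
move=> om.
apply: le_trans.
  apply: (@rad_bound R _ (bern_mask2 rho (d:=d)) d n (@hIII R d)
    (fun x r k => x 0 k * ((r.1 k)%:R * (r.2 k)%:R)) B1 (S om) (rho ^+ 2 * B2 ^+ 2) B10).
  - by move=> r; rewrite /bern_mask2 mulr_ge0 // bern_mask_ge0.
  - rewrite /bern_mask2 -(pair_bigA _ (fun r1 r2 => bern_mask rho r1 * bern_mask rho r2)) /=.
    under eq_bigr do rewrite -mulr_sumr bern_mask_sum1 mulr1.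
    exact: bern_mask_sum1.
  - move=> w x r; rewrite /hIII /dotv; apply: eq_bigr => k _; rewrite !mxE; ring.
  - move=> i.
    have -> : \sum_r bern_mask2 rho r *
        \sum_k (S om i 0 k * ((r.1 k)%:R * (r.2 k)%:R)) ^+ 2
      = \sum_k S om i 0 k ^+ 2 *
         ((\sum_(r : {ffun 'I_d -> bool}) bern_mask rho r * ((r k)%:R ^+ 2)) *
          (\sum_(r : {ffun 'I_d -> bool}) bern_mask rho r * ((r k)%:R ^+ 2))).
      rewrite -(pair_bigA _ (fun r1 r2 => bern_mask2 rho (r1, r2) *
        \sum_k (S om i 0 k * (((r1, r2).1 k)%:R * ((r1, r2).2 k)%:R)) ^+ 2)) /=.
      under eq_bigr do (under eq_bigr do rewrite mulr_sumr).
      under eq_bigr do rewrite exchange_big /=.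
      rewrite exchange_big /=; apply: eq_bigr => k _.
      rewrite big_distrl /= mulr_sumr; apply: eq_bigr => r1 _.
      rewrite big_distrr /= mulr_sumr; apply: eq_bigr => r2 _.
      rewrite /bern_mask2 /=; ring.
    under eq_bigr do rewrite bern_mask_sq.
    rewrite -mulr_suml mulrC -expr2 ler_wpM2l ?sqr_ge0 //.
    exact: norm_sq_le.
have -> : Num.sqrt (n%:R * (rho ^+ 2 * B2 ^+ 2)) = sn * (rho * B2).
  by rewrite sqrtrM ?ler0n // -exprMn sqrtr_sqr ger0_norm // mulr_ge0 // ltW.
rewrite -snn le_eqVlt; apply/orP; left; apply/eqP; field.
by rewrite gt_eqF.
Qed.
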